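(* Let $h$ be a $K$-strongly convex penalty function on $\Delta$, let $p\in\Delta$, and let $\Delta_p=\{x\in\Delta:\operatorname{supp}(x)\supseteq\operatorname{supp}(p)\}$. Then: (i) $D_h(p,x)<+\infty$ whenever $x\in\Delta_p$; (ii) $D_h(p,x)\ge0$ for all $x\in\Delta$, with $D_h(p,x)=0$ if and only if $p=x$; in particular $D_h(p,x)\ge\tfrac12K\|x-p\|^2$ for all $x\in\Delta$; (iii) $D_h(p,x_j)\to D_h(p,x)$ whenever $x_j\to x$ in $\Delta_p$.
   Context: $\Delta$ is the unit simplex of $\mathbb{R}^n$. A $K$-strongly convex penalty function on $\Delta$ is $h:\Delta\to\mathbb{R}$ that is continuous, $C^\infty$ on the relative interior of every face of $\Delta$, and satisfies $h(tx_1+(1-t)x_2)\le th(x_1)+(1-t)h(x_2)-\tfrac12Kt(1-t)\|x_1-x_2\|^2$ for all $x_1,x_2\in\Delta$, $t\in[0,1]$. The Bregman divergence is $D_h(p,x)=h(p)-h(x)-h'(x;p-x)$ for $p,x\in\Delta$, where $h'(x;p-x)=\lim_{t\to0^+}t^{-1}[h(x+t(p-x))-h(x)]$ is the one-sided directional derivative (possibly $-\infty$, in which case $D_h(p,x)=+\infty$). *)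

(* Defs.v *)
From HB Require Import structures.
From mathcomp Require Import all_boot all_order all_algebra.
From mathcomp Require Import all_classical all_reals all_analysis.
Set Implicit Arguments. Unset Strict Implicit. Unset Printing Implicit Defensive.
Import Order.TTheory GRing.Theory Num.Theory.
Import numFieldNormedType.Exports.
Local Open Scope classical_set_scope.
Local Open Scope ring_scope.

Section Defs.
Variables (R : realType) (n : nat).
Notation V := 'rV[R]_n.

Definition simplex : set V :=
  [set x | (forall i, 0 <= x ord0 i) /\ \sum_i x ord0 i = 1].

Definition supp (x : V) : set 'I_n := [set i | x ord0 i != 0].

Definition simplex_p (p : V) : set V :=
  [set x | simplex x /\ supp p `<=` supp x].

Definition sqnorm (v : V) : R := \sum_i v ord0 i ^+ 2.

Definition relint_face (S : {set 'I_n}) : set V :=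
  [set x | simplex x /\ forall i, (x ord0 i != 0) = (i \in S)].

Definition tangent_face (S : {set 'I_n}) (v : V) : Prop :=
  (forall i, i \notin S -> v ord0 i = 0) /\ \sum_i v ord0 i = 0.

Fixpoint iter_der (vs : seq V) (f : V -> R) : V -> R :=
  match vs with
  | [::] => f
  | v :: vs' => iter_der vs' ('D_v f)
  end.

Definition smooth_relint (S : {set 'I_n}) (f : V -> R) : Prop :=
  forall vs : seq V, (forall v, v \in vs -> tangent_face S v) ->
    {within relint_face S, continuous (iter_der vs f)} /\
    (forall x v, relint_face S x -> tangent_face S v ->
       derivable (iter_der vs f) x v).

Definition strongly_convex_penalty (K : R) (h : V -> R) : Prop :=
  {within simplex, continuous h} /\
  (forall S : {set 'I_n}, smooth_relint S h) /\
  (forall x1 x2 t, simplex x1 -> simplex x2 -> 0 <= t <= 1 ->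
     h (t *: x1 + (1 - t) *: x2) <=
       t * h x1 + (1 - t) * h x2 - 2^-1 * K * t * (1 - t) * sqnorm (x1 - x2)).

Definition dir_der (h : V -> R) (x d : V) : \bar R :=
  lim ((fun t : R => ((h (x + t *: d) - h x) / t)%:E) @ 0^'+).

(* Bregman divergence D_h(p, x) (= +oo when h'(x; p - x) = -oo) *)
Definition bregman (h : V -> R) (p x : V) : \bar R :=
  ((h p - h x)%:E - dir_der h x (p - x))%E.

End Defs.

(* Main.v *)
Require Import Defs.
From HB Require Import structures.
From mathcomp Require Import all_boot all_order all_algebra.
From mathcomp Require Import all_classical all_reals all_analysis.
From mathcomp Require Import lra ring.
Import Order.TTheory GRing.Theory Num.Theory.
Import numFieldNormedType.Exports.
Local Open Scope classical_set_scope.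
Local Open Scope ring_scope.

Section Help.
Variables (R : realType) (n : nat).
Notation V := 'rV[R]_n.

Lemma sqnorm_ge0 (v : V) : 0 <= sqnorm v.
Proof. by apply: sumr_ge0 => i _; exact: sqr_ge0. Qed.

Lemma sqnormN (v : V) : sqnorm (- v) = sqnorm v.
Proof. by apply: eq_bigr => i _; rewrite mxE sqrrN. Qed.

Lemma sqnorm_eq0 (v : V) : sqnorm v = 0 -> v = 0.
Proof.
move=> /eqP; rewrite psumr_eq0 => [/allP H|i _]; last exact: sqr_ge0.
apply/rowP => i; rewrite mxE; apply/eqP.
by rewrite -sqrf_eq0; apply: H; rewrite mem_index_enum.
Qed.

Lemma simplex_conv (x y : V) t : simplex x -> simplex y -> 0 <= t <= 1 ->
  simplex (t *: x + (1 - t) *: y).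
Proof.
move=> [x0 x1] [y0 y1] /andP[t0 t1]; split.
  move=> i; rewrite !mxE; apply: addr_ge0; apply: mulr_ge0 => //.
  by rewrite subr_ge0.
under eq_bigr do rewrite !mxE.
by rewrite big_split /= -!mulr_sumr x1 y1 !mulr1 addrC subrK.
Qed.

Lemma seg_eq (x p : V) t : x + t *: (p - x) = t *: p + (1 - t) *: x.
Proof. by rewrite scalerBr scalerBl scale1r; apply/rowP => i; rewrite !mxE; lra. Qed.

End Help.


Section Main.
Variables (R : realType) (n : nat) (K : R) (h : 'rV[R]_n -> R) (p : 'rV[R]_n).
Notation V := 'rV[R]_n.
Hypothesis hK : 0 < K.
Hypothesis hcv : forall x1 x2 t, simplex x1 -> simplex x2 -> 0 <= t <= 1 ->
     h (t *: x1 + (1 - t) *: x2) <=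
       t * h x1 + (1 - t) * h x2 - 2^-1 * K * t * (1 - t) * sqnorm (x1 - x2).
Hypothesis hp : simplex p.

Definition quot (x : V) t := (h (x + t *: (p - x)) - h x) / t.

Lemma hconv x1 x2 t : simplex x1 -> simplex x2 -> 0 <= t <= 1 ->
  h (t *: x1 + (1 - t) *: x2) <= t * h x1 + (1 - t) * h x2.
Proof.
move=> s1 s2 t01; apply: le_trans; first exact: (hcv _ _ _ s1 s2 t01).
rewrite lerBlDr lerDl; move: t01 => /andP[t0 t1].
apply: mulr_ge0; last exact: sqnorm_ge0.
apply: mulr_ge0; [apply: mulr_ge0; [apply: mulr_ge0|] |]. all: try lra. exact: ltW.
Qed.

Lemma quot_strong x t : simplex x -> 0 < t <= 1 ->
  quot x t <= h p - h x - 2^-1 * K * (1 - t) * sqnorm (p - x).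
Proof.
move=> sx /andP[t0 t1]; rewrite /quot ler_pdivrMr // seg_eq.
have := hcv _ _ _ hp sx (_ : 0 <= t <= 1); rewrite ltW //= => /(_ t1).
set A := h _; set S := sqnorm _; nra.
Qed.

Lemma quot_mono x s t : simplex x -> 0 < s -> s <= t -> t <= 1 ->
  quot x s <= quot x t.
Proof.
move=> sx s0 st t1; have t0 : 0 < t := lt_le_trans s0 st.
have sxt : simplex (x + t *: (p - x)).
  by rewrite seg_eq; apply: simplex_conv => //; rewrite t1 ltW.
have st1 : 0 <= s / t <= 1.
  by apply/andP; split; [rewrite divr_ge0 // ltW | rewrite ler_pdivrMr // mul1r].
have := hconv _ _ _ sxt sx st1.
have -> : s / t *: (x + t *: (p - x)) + (1 - s / t) *: x = x + s *: (p - x).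
  rewrite scalerDr scalerA mulfVK ?gt_eqF // scalerBl scale1r.
  by apply/rowP => i; rewrite !mxE; lra.
move=> H; rewrite /quot ler_pdivrMr // mulrAC ler_pdivlMr //.
move: H; set A := h _; set B := h _; set C := h x => H.
have : A * t <= (s / t * B + (1 - s / t) * C) * t by rewrite ler_pM2r.
have Hs : s = s / t * t by rewrite mulfVK ?gt_eqF.
set u := s / t in Hs *; rewrite [in X in _ -> X]Hs => H2.
have -> : (B - C) * (u * t) = (u * B + (1 - u) * C) * t - C * t by ring.
by rewrite mulrBl lerD2r.
Qed.

Lemma back_le x s t : simplex x -> simplex (x - s *: (p - x)) -> 0 < s ->
  0 < t -> t <= 1 -> (h x - h (x - s *: (p - x))) / s <= quot x t.
Proof.
move=> sx sy s0 t0 t1.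
have sxt : simplex (x + t *: (p - x)).
  by rewrite seg_eq; apply: simplex_conv => //; rewrite t1 ltW.
have st0 : 0 < s + t by rewrite addr_gt0.
have st1 : 0 <= t / (s + t) <= 1.
  by apply/andP; split; [rewrite divr_ge0 // ltW | rewrite ler_pdivrMr // mul1r lerDr ltW].
have := hconv _ _ _ sy sxt st1.
have E : 1 - t / (s + t) = s / (s + t).
  by apply: (mulIf (lt0r_neq0 st0)); rewrite mulrBl mul1r !mulfVK ?gt_eqF //; lra.
have -> : t / (s + t) *: (x - s *: (p - x)) + (1 - t / (s + t)) *: (x + t *: (p - x)) = x.
  rewrite E; apply/rowP => i; rewrite !mxE.
  by field; rewrite gt_eqF.
rewrite E => H; rewrite /quot ler_pdivrMr // mulrAC ler_pdivlMr //.
move: H; set A := h (x - _); set B := h (x + _); set C := h x => H.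
have H3 : C * (s + t) <= t * A + s * B.
  have := H; rewrite -(ler_pM2r st0) mulrDl !(mulrAC _ _ (s + t)).
  by rewrite !mulfK ?gt_eqF.
rewrite -subr_le0.
have -> : (C - A) * t - (B - C) * s = C * (s + t) - (t * A + s * B) by ring.
by rewrite subr_le0.
Qed.

End Main.


Section Main2.
Variables (R : realType) (n : nat) (K : R) (h : 'rV[R]_n -> R) (p : 'rV[R]_n).
Notation V := 'rV[R]_n.
Hypothesis hK : 0 < K.
Hypothesis hS : strongly_convex_penalty K h.
Hypothesis hp : simplex p.
Let hcv := hS.2.2.
Let hc := hS.1.
Let hsm := hS.2.1.
Local Notation q := (@quot R n h p).
Let qmono := @quot_mono R n K h p hK hcv hp.
Let ble := @back_le R n K h p hK hcv hp.
Let qstr := @quot_strong R n K h p hcv hp.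

Lemma dright (f : R -> R) (l : R) : f @ (0:R)^' --> l -> f @ (0:R)^'+ --> l.
Proof.
move=> H; apply: cvg_trans H; apply: cvg_fmap2 => P /=.
rewrite /dnbhs /within /=; apply: filterS => y Hy y0; apply: Hy; exact: lt0r_neq0.
Qed.

Lemma dir_der_ub x : simplex x ->
  (dir_der h x (p - x) <= (h p - h x - 2^-1 * K * sqnorm (p - x))%:E)%E.
Proof.
move=> sx; rewrite /dir_der.
have cv : cvg ((fun t => (q x t)%:E) @ 0^'+).
  apply/cvg_ex; eexists; apply: (nondecreasing_at_right_cvge (BLeft 1)).
    by rewrite bnd_simp.
  move=> a b; rewrite !in_itv /= => /andP[a0 a1] /andP[b0 b1] ab.
  by rewrite lee_fin; apply: qmono => //; exact: ltW.
set S := sqnorm _.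
have Hg : (fun t => h p - h x - 2^-1 * K * (1 - t) * S) @ 0^'+ -->
          (h p - h x - 2^-1 * K * (1 - 0) * S).
  apply: cvg_at_right_filter; apply: cvgB; first exact: cvg_cst.
  apply: cvgM; last exact: cvg_cst.
  apply: cvgM; first exact: cvg_cst.
  by apply: cvgB; [exact: cvg_cst | exact: cvg_id].
have Hg' : (fun t => (h p - h x - 2^-1 * K * (1 - t) * S)%:E) @ 0^'+ -->
          (h p - h x - 2^-1 * K * (1 - 0) * S)%:E.
  by apply: cvg_EFin; [exact: nearW | exact: Hg].
have -> : h p - h x - 2^-1 * K * S = h p - h x - 2^-1 * K * (1 - 0) * S.
  by rewrite subr0 mulr1.
rewrite -(cvg_lim _ Hg') //.
apply: lee_lim => //; first exact: cvgP Hg'.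
near=> t; rewrite lee_fin; apply: qstr => //.
apply/andP; split; first by near: t; exact: nbhs_right_gt.
by near: t; apply: nbhs_right_le; exact: ltr01.
Unshelve. all: by end_near. Qed.


Lemma derivable_p x : simplex_p p x -> derivable h x (p - x).
Proof.
move=> [sx spx]; pose S : {set 'I_n} := finset (fun i => x ord0 i != 0).
have rx : relint_face S x by split => // i; rewrite inE.
have tv : tangent_face S (p - x).
  split.
    move=> i; rewrite inE negbK => /eqP xi; rewrite !mxE xi subr0.
    apply/eqP/negP => /negP pi.
    by have := spx i pi; rewrite /supp /= xi eqxx.
  under eq_bigr do rewrite !mxE.
  by rewrite sumrB hp.2 sx.2 subrr.
have [_ H2] := hsm S [::] (fun v => ltac:(by rewrite in_nil)).
exact: (H2 x (p - x) rx tv).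
Qed.

Lemma der_quot x : simplex_p p x -> q x @ (0:R)^' --> 'D_(p - x) h x.
Proof.
move=> /derivable_p D.
have -> : q x = (fun t => t^-1 *: ((h \o shift x) (t *: (p - x)) - h x)).
  by apply: boolp.funext => t; rewrite /quot /= (addrC (t *: _) x) mulrC.
by apply: cvg_toP; [exact: D|].
Qed.


Lemma dir_der_eq x : simplex_p p x -> dir_der h x (p - x) = ('D_(p - x) h x)%:E.
Proof.
move=> spx; rewrite /dir_der; apply: cvg_lim => //.
apply: cvg_EFin; first exact: nearW.
exact: (dright _ _ (der_quot _ spx)).
Qed.

Lemma hseq (w : nat -> V) y : (\forall j \near \oo, simplex (w j)) -> simplex y ->
  w @ \oo --> y -> h (w j) @[j --> \oo] --> h y.
Proof.
move=> sw sy wy.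
have hy := (subspace_continuousP _ h).1 hc y sy.
apply: cvg_trans hy => P /= Py.
have := wy _ Py; rewrite /= => H.
move: H; rewrite !nbhs_simpl /=; move=> H2; apply: filterS2 H2 sw => j; apply.
Qed.


Lemma dleft (f : R -> R) (l : R) : f @ (0:R)^' --> l -> f @ (0:R)^'- --> l.
Proof.
move=> H; apply: cvg_trans H; apply: cvg_fmap2 => P /=.
rewrite /dnbhs /within /=; apply: filterS => y Hy y0; apply: Hy; exact: ltr0_neq0.
Qed.

Lemma back_cvg x : simplex_p p x ->
  (fun s => (h x - h (x - s *: (p - x))) / s) @ (0:R)^'+ --> 'D_(p - x) h x.
Proof.
move=> spx; have := dleft _ _ (der_quot _ spx).
move/cvg_at_leftNP; rewrite oppr0.
have -> : (q x \o -%R) = (fun s => (h x - h (x - s *: (p - x))) / s) => //.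
apply: boolp.funext => s; rewrite /quot /= scaleNr.
by rewrite invrN mulrN -mulNr opprB.
Qed.

Lemma Dv_le x t : simplex_p p x -> 0 < t -> t <= 1 -> 'D_(p - x) h x <= q x t.
Proof.
move=> spx t0 t1; have c := dright _ _ (der_quot _ spx).
apply: (cvgr_to_le c); near=> s; apply: qmono => //; first exact: spx.1.
by near: s; apply: nbhs_right_le.
Unshelve. all: by end_near. Qed.

Lemma Dv_ge x s : simplex_p p x -> simplex (x - s *: (p - x)) -> 0 < s ->
  (h x - h (x - s *: (p - x))) / s <= 'D_(p - x) h x.
Proof.
move=> spx sy s0; have c := dright _ _ (der_quot _ spx).
apply: (cvgr_to_ge c); near=> t; apply: ble => //; first exact: spx.1.
by near: t; apply: nbhs_right_le; exact: ltr01.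
Unshelve. all: by end_near. Qed.

Lemma coord_le1 i : p ord0 i <= 1.
Proof.
rewrite -hp.2 (bigD1 i) //= lerDl; apply: sumr_ge0 => j _; exact: hp.1.
Qed.

Lemma simplex_back y s : simplex y -> 0 <= s ->
  (forall i, p ord0 i != 0 -> s <= y ord0 i) -> simplex (y - s *: (p - y)).
Proof.
move=> [y0 y1] s0 H; split.
  move=> i; rewrite !mxE; have [pi0|pi0] := eqVneq (p ord0 i) 0.
    rewrite pi0 sub0r mulrN opprK addr_ge0 // mulr_ge0 //.
  have := H i pi0; have := coord_le1 i; have := y0 i; have := hp.1 i.
  move=> a b c d.
  have e1 : s * p ord0 i <= s by rewrite -[leRHS]mulr1 ler_wpM2l.
  have e2 : 0 <= s * y ord0 i by rewrite mulr_ge0.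
  rewrite mulrBr; lra.
under eq_bigr do rewrite !mxE.
rewrite sumrB -mulr_sumr sumrB hp.2 y1 subrr mulr0 subr0 //.
Qed.


Lemma Dv_cvg u x : (forall j, simplex_p p (u j)) -> simplex_p p x -> u @ \oo --> x ->
  'D_(p - u j) h (u j) @[j --> \oo] --> 'D_(p - x) h x.
Proof.
move=> su spx ux; have sx := spx.1.
have sU j : simplex (u j) := (su j).1.
have seqc (c : R) : (fun j => u j + c *: (p - u j)) @ \oo --> x + c *: (p - x).
  apply: cvgD => //; apply: cvgZ; first exact: cvg_cst.
  by apply: cvgB => //; exact: cvg_cst.
have seqb (c : R) : (fun j => u j - c *: (p - u j)) @ \oo --> x - c *: (p - x).
  apply: cvgB => //; apply: cvgZ; first exact: cvg_cst.
  by apply: cvgB => //; exact: cvg_cst.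
have hU : h (u j) @[j --> \oo] --> h x.
  by apply: (hseq _ _ _ sx ux); apply: nearW.
have coord i : (fun j => u j ord0 i) @ \oo --> x ord0 i.
  exact: (@continuous_cvg _ _ _ _ _ u (fun M : 'rV[R]_n => M ord0 i) x (@coord_continuous R 1 n ord0 i x) ux).
apply/cvgrPdist_le => e e0.
have e20 : 0 < e / 2 by rewrite divr_gt0.
have up : \forall j \near \oo, 'D_(p - u j) h (u j) <= 'D_(p - x) h x + e.
  near (0:R)^'+ => t.
  have t0 : 0 < t by near: t; exact: nbhs_right_gt.
  have t1 : t <= 1 by near: t; apply: nbhs_right_le; exact: ltr01.
  have qt : q x t <= 'D_(p - x) h x + e / 2.
    near: t; have c := dright _ _ (der_quot _ spx).
    by apply: (cvgr_le _ c); rewrite ltrDl.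
  have cq : q (u j) t @[j --> \oo] --> q x t.
    rewrite /quot; apply: cvgM; last exact: cvg_cst.
    apply: cvgB => //; apply: (hseq _ _ _ _ (seqc t)).
      by apply: nearW => j; rewrite seg_eq; apply: simplex_conv => //; rewrite t1 ltW.
    by rewrite seg_eq; apply: simplex_conv => //; rewrite t1 ltW.
  near=> j.
  apply: le_trans (Dv_le _ _ (su j) t0 t1) _.
  have : q (u j) t <= q x t + e / 2.
    by near: j; apply: (cvgr_le _ cq); rewrite ltrDl.
  lra.
have lo : \forall j \near \oo, 'D_(p - x) h x - e <= 'D_(p - u j) h (u j).
  near (0:R)^'+ => s.
  have s0 : 0 < s by near: s; exact: nbhs_right_gt.
  have Hs : forall i, p ord0 i != 0 -> s <= x ord0 i / 2.
    near: s; apply: filter_forall => i; have [pi0|pi0] := eqVneq (p ord0 i) 0.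
      by apply: nearW => y; rewrite ?pi0 ?eqxx.
    have xi : 0 < x ord0 i.
      by rewrite lt0r; have := spx.2 i pi0; rewrite /supp /= => ->; rewrite sx.1.
    apply: filterS (nbhs_right_le (_ : 0 < x ord0 i / 2)) => [y Hy _ //|].
    by rewrite divr_gt0.
  have xi2 i : p ord0 i != 0 -> x ord0 i / 2 < x ord0 i.
    move=> pi0; have xi : 0 < x ord0 i.
      by rewrite lt0r; have := spx.2 i pi0; rewrite /supp /= => ->; rewrite sx.1.
    lra.
  have bs : 'D_(p - x) h x - e / 2 <= (h x - h (x - s *: (p - x))) / s.
    near: s; apply: (cvgr_ge _ (back_cvg _ spx)); lra.
  have sxb : simplex (x - s *: (p - x)).
    apply: simplex_back => //.
    by move=> i pi; apply: le_trans (Hs i pi) (ltW (xi2 i pi)).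
  have nU : \forall j \near \oo, forall i, p ord0 i != 0 -> x ord0 i / 2 < u j ord0 i.
    apply: filter_forall => i; have [pi0|pi0] := eqVneq (p ord0 i) 0.
      by apply: nearW => y; rewrite ?pi0 ?eqxx.
    apply: filterS (cvgr_gt _ (coord i) _ (xi2 i pi0)) => [y Hy _ //].
  have sUb : \forall j \near \oo, simplex (u j - s *: (p - u j)).
    apply: filterS nU => j Hj; apply: simplex_back => //.
    by move=> i pi; apply: le_trans (Hs i pi) (ltW (Hj i pi)).
  have cb : (h (u j) - h (u j - s *: (p - u j))) / s @[j --> \oo] -->
            (h x - h (x - s *: (p - x))) / s.
    apply: cvgM; last exact: cvg_cst.
    by apply: cvgB => //; exact: (hseq _ _ sUb sxb (seqb s)).
  near=> j.
  have : (h x - h (x - s *: (p - x))) / s - e / 2 <=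
         (h (u j) - h (u j - s *: (p - u j))) / s.
    by near: j; apply: (cvgr_ge _ cb); lra.
  have : (h (u j) - h (u j - s *: (p - u j))) / s <= 'D_(p - u j) h (u j).
    apply: Dv_ge => //; by near: j.
  lra.
move: up lo; apply: filterS2 => j Hu Hl; rewrite ler_distl; apply/andP; split; lra.
Unshelve. all: by end_near. Qed.


Lemma bregman_p x : simplex_p p x ->
  bregman h p x = (h p - h x - 'D_(p - x) h x)%:E.
Proof. by move=> spx; rewrite /bregman dir_der_eq. Qed.

Lemma bregman_lb x : simplex x ->
  ((2^-1 * K * sqnorm (x - p))%:E <= bregman h p x)%E.
Proof.
move=> sx; have := dir_der_ub x sx; rewrite /bregman.
rewrite -sqnormN opprB.
case: (dir_der h x (p - x)) => [r| |] //=.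
  by rewrite !lee_fin => H; lra.
by move=> _; rewrite leey.
Qed.

Lemma bregman_self x : bregman h x x = 0%E.
Proof.
rewrite /bregman /dir_der !subrr.
under eq_fun do rewrite scaler0 addr0 subrr mul0r.
by rewrite (cvg_lim _ (@cvg_cst _ _ _ _ _)) // sube0.
Qed.

End Main2.


Theorem propositionC2 (R : realType) (n : nat) (K : R) (h : 'rV[R]_n -> R)
    (p : 'rV[R]_n) :
  0 < K -> strongly_convex_penalty K h -> simplex p ->
  (* (i) *)
  (forall x, simplex_p p x -> (bregman h p x < +oo)%E) /\
  (* (ii) *)
  (forall x, simplex x ->
     (0 <= bregman h p x)%E /\
     (bregman h p x = 0%E <-> p = x) /\
     ((2^-1 * K * sqnorm (x - p))%:E <= bregman h p x)%E) /\
  (* (iii) *)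
  (forall (u : nat -> 'rV[R]_n) (x : 'rV[R]_n),
     (forall j, simplex_p p (u j)) -> simplex_p p x -> u @ \oo --> x ->
     (fun j => bregman h p (u j)) @ \oo --> bregman h p x).
Proof.
move=> hK hS hp; split; [|split].
- by move=> x spx; rewrite (bregman_p _ _ _ _ _ hS hp x spx) ltry.
- move=> x sx; have lb := bregman_lb _ _ _ _ _ hK hS hp x sx.
  have s0 : (0 <= (2^-1 * K * sqnorm (x - p))%:E)%E.
    rewrite lee_fin; apply: mulr_ge0; last exact: sqnorm_ge0.
    by apply: mulr_ge0; [lra | exact: ltW].
  split; first exact: le_trans s0 lb.
  split=> //; split => [B0|<-]; last exact: bregman_self.
  move: lb; rewrite B0 lee_fin => H.
  have : sqnorm (x - p) = 0.
    apply/eqP; rewrite eq_le sqnorm_ge0 andbT.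
    rewrite -(@ler_pM2l _ (2^-1 * K)) ?mulr0 //.
    by apply: mulr_gt0 => //; lra.
  by move/sqnorm_eq0/eqP; rewrite subr_eq0 => /eqP ->.
- move=> u x su spx ux.
  have -> : (fun j => bregman h p (u j)) =
            (fun j => (h p - h (u j) - 'D_(p - u j) h (u j))%:E).
    by apply: boolp.funext => j; rewrite (bregman_p _ _ _ _ _ hS hp _ (su j)).
  rewrite (bregman_p _ _ _ _ _ hS hp _ spx).
  apply: cvg_EFin; first exact: nearW.
  apply: cvgB; last exact: (Dv_cvg _ _ _ _ _ hK hS hp u x su spx ux).
  apply: cvgB; first exact: cvg_cst.
  apply: (hseq _ _ _ _ hS) => //; first by apply: nearW => j; exact: (su j).1.
  exact: spx.1.
Qed.
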